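(* \begin{enumerate} \item The element $\{1\}$ is a cancellative prime element of $\mathcal P_{\mathrm{fin}}(\mathbb N_0)$, and $\mathcal P_{\mathrm{fin}}(\mathbb N_0)=F\times\mathcal P_{\mathrm{fin},0}(\mathbb N_0)$, where $F$ is the free abelian monoid generated by $\{1\}$. Moreover, $\mathcal P_{\mathrm{fin}}(\mathbb N_0)$ is fully elastic. \item Let $R=D[X_1,\dots,X_n]$ be the polynomial ring in $n\ge2$ indeterminates over a domain $D$ such that $\mathcal I(R)$ is a BF-monoid. Then $\mathcal P_{\mathrm{fin}}(\mathbb N_0)$ is isomorphic to a submonoid of $\mathcal I(R)$. \end{enumerate}
   Context: $\mathcal P_{\mathrm{fin}}(\mathbb N_0)$ (the power monoid) is the set of finite nonempty subsets of $\mathbb N_0$ with set addition $A+B=\{a+b:a\in A,b\in B\}$ as operation (identity $\{0\}$); $\mathcal P_{\mathrm{fin},0}(\mathbb N_0)$ is its submonoid of sets containing $0$. These are commutative, reduced, unit-cancellative. An element $p$ is prime if it is a non-unit and $p\mid a+b$ implies $p\mid a$ or $p\mid b$; cancellative if $p+b=p+c$ implies $b=c$. $\mathcal I(R)$ is the semigroup of nonzero ideals under multiplication. Arithmetic notions: atoms; $\mathsf L(a)$ = set of lengths of factorizations of $a$ into atoms (up to units); $\mathcal L(H)=\{\mathsf L(a)\}$; BF-monoid: all $\mathsf L(a)$ finite nonempty; $\rho(L)=\max L/\min L$, $\rho(\{0\})=1$, $\rho(H)=\sup\rho(L)$; fully elastic: every rational $q$ with $1<q<\rho(H)$ equals $\rho(L)$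 for some $L\in\mathcal L(H)$. *)

(* Defs.v *)
From HB Require Import structures.
From mathcomp Require Import all_boot all_algebra.
From mathcomp Require Import finmap.
From mathcomp Require Import mpoly.

Set Implicit Arguments.
Unset Strict Implicit.
Unset Printing Implicit Defensive.

Import GRing.Theory Num.Theory.
Local Open Scope fset_scope.

(* Arithmetic notions for a commutative monoid H, presented as a       *)
(* subset [S] of a type [T] closed under [op], with identity [e].      *)
Section MonoidNotions.
Variables (T : Type) (S : T -> Prop) (op : T -> T -> T) (e : T).

Definition mdvd (a b : T) : Prop := exists c, S c /\ b = op a c.

Definition munit (u : T) : Prop := S u /\ exists v, S v /\ op u v = e.

Definition matom (a : T) : Prop :=
  S a /\ ~ munit a /\
  forall b c, S b -> S c -> a = op b c -> munit b \/ munit c.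

Definition mprime (p : T) : Prop :=
  S p /\ ~ munit p /\
  forall a b, S a -> S b -> mdvd p (op a b) -> mdvd p a \/ mdvd p b.

Definition mcancellative (p : T) : Prop :=
  forall b c, S b -> S c -> op p b = op p c -> b = c.

Definition mlengths (a : T) (k : nat) : Prop :=
  exists (l : seq T) (u : T),
    size l = k /\ (forall i, (i < size l)%N -> matom (nth e l i)) /\
    munit u /\ a = op u (foldr op e l).

Definition mBF : Prop :=
  forall a, S a -> (exists k, mlengths a k) /\
                   (exists N, forall k, mlengths a k -> (k <= N)%N).

(* rho(L) = r  (with rho({0}) = 1) *)
Definition rho_is (L : nat -> Prop) (r : rat) : Prop :=
  ((forall k, L k <-> k = 0%N) /\ r = 1%R) \/
  exists k m : nat, L k /\ L m /\ (0 < m)%N /\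
     (forall x, L x -> (m <= x <= k)%N) /\ r = (k%:R / m%:R)%R.

(* q < rho(H) = sup { rho(L(a)) } *)
Definition elasticity_gt (q : rat) : Prop :=
  exists a, S a /\ exists k m : nat,
    mlengths a k /\ mlengths a m /\ (0 < m)%N /\ (q * m%:R < k%:R)%R.

Definition fully_elastic : Prop :=
  forall q : rat, (1 < q)%R -> elasticity_gt q ->
    exists a, S a /\ rho_is (mlengths a) q.

End MonoidNotions.

Definition psum (A B : {fset nat}) : {fset nat} := [fset (a + b)%N | a in A, b in B].

Definition Pfin (A : {fset nat}) : Prop := A != fset0.
Definition Pfin0 (A : {fset nat}) : Prop := (0 \in A).

Definition pone_pow (k : nat) : {fset nat} := iter k (psum [fset 1]) [fset 0].

(* The semigroup I(R) of nonzero ideals of a commutative ring R        *)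
(* (ideals as predicates, ideal product = finite sums of products)     *)
Section Ideals.
Variable R : comRingType.
Local Open Scope ring_scope.

Definition is_ideal (I : R -> Prop) : Prop :=
  I 0 /\ (forall x y, I x -> I y -> I (x + y)) /\ (forall r x, I x -> I (r * x)).

Definition nz_ideal (I : R -> Prop) : Prop := is_ideal I /\ exists x, I x /\ x != 0.

Definition ideal_mul (I J : R -> Prop) : R -> Prop :=
  fun x => exists s : seq (R * R),
    (forall p, p \in s -> I p.1 /\ J p.2) /\ x = \sum_(p <- s) p.1 * p.2.

Definition full_ideal : R -> Prop := fun _ => True.
End Ideals.

(* Main.v *)
Require Import Defs.
From HB Require Import structures.
From mathcomp Require Import all_boot all_algebra.
From mathcomp Require Import finmap.
From mathcomp Require Import mpoly.
From mathcomp Require Import zify ring lra.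
From mathcomp Require Import all_order.
From Stdlib Require Import FunctionalExtensionality PropExtensionality.
Import Order.TTheory GRing.Theory Num.Theory.
Set Implicit Arguments.
Unset Strict Implicit.
Local Open Scope fset_scope.

Lemma psumP x A B : reflect (exists a b, [/\ a \in A, b \in B & x = (a + b)%N]) (x \in psum A B).
Proof.
apply: (iffP (imfset2P _ _ _ _ _)).
  by move=> [a aA [b bB ->]]; exists a, b.
by move=> [a [b [aA bB ->]]]; exists a => //; exists b.
Qed.

Lemma psum_in a b A B : a \in A -> b \in B -> (a + b)%N \in psum A B.
Proof. by move=> aA bB; apply/psumP; exists a, b. Qed.

Lemma psumC A B : psum A B = psum B A.
Proof.
apply/fsetP=> x; apply/psumP/psumP => [][a [b [aA bB ->]]]; exists b, a; split=> //; lia.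
Qed.

Lemma psumA A B C : psum A (psum B C) = psum (psum A B) C.
Proof.
apply/fsetP=> x; apply/psumP/psumP => [][a [y [aA yBC ->]]].
  case/psumP: yBC => b [c [bB cC ->]]; exists (a + b)%N, c; split=> //; first exact: psum_in. lia.
case/psumP: aA => b [c [bB cC ->]]; exists b, (c + y)%N; split=> //; first exact: psum_in. lia.
Qed.

Lemma psum1P c x A : (x \in psum [fset c] A) = (c <= x)%N && ((x - c)%N \in A).
Proof.
apply/psumP/andP => [[a [b [aA bB ->]]]|[cx xA]].
  move: aA; rewrite in_fset1 => /eqP ->; rewrite addKn; split => //; lia.
exists c, (x - c)%N; split => //; [by rewrite in_fset1 | lia].
Qed.

Lemma psum0 A : psum [fset 0] A = A.
Proof. by apply/fsetP=> x; rewrite psum1P subn0. Qed.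

Lemma psum1_inj c A B : psum [fset c] A = psum [fset c] B -> A = B.
Proof.
move=> e; apply/fsetP=> x; have := congr1 (fun S => (x + c)%N \in S) e.
by rewrite /= !psum1P leq_addl addnK.
Qed.

Lemma psum11 a b : psum [fset a] [fset b] = [fset (a + b)%N].
Proof.
apply/fsetP=> x; rewrite psum1P !in_fset1; apply/andP/eqP; [case=> h /eqP; lia| move=> ->; split; [lia|apply/eqP; lia]].
Qed.

Lemma Pfin_psum A B : Pfin A -> Pfin B -> Pfin (psum A B).
Proof.
move=> /fset0Pn [a aA] /fset0Pn [b bB]; apply/fset0Pn; exists (a+b)%N; exact: psum_in.
Qed.

Lemma all0 A : Pfin A -> (forall x, x \in A -> x = 0%N) -> A = [fset 0].
Proof.
move=> /fset0Pn [a aA] h; apply/fsetP => x; rewrite in_fset1; apply/idP/eqP.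
  exact: h.
by move=> ->; rewrite -(h a aA).
Qed.

Lemma unitP u : munit Pfin psum [fset 0] u <-> u = [fset 0].
Proof.
split.
  move=> [Pu [v [Pv e]]]; apply: all0 => // x xu.
  case/fset0Pn: Pv => y yv.
  have := psum_in xu yv; rewrite e in_fset1 => /eqP; lia.
move=> ->; split; first by apply/fset0Pn; exists 0%N; rewrite in_fset1.
exists [fset 0]; split; first by apply/fset0Pn; exists 0%N; rewrite in_fset1.
exact: psum0.
Qed.

Lemma Pfin1 c : Pfin [fset c].
Proof. by apply/fset0Pn; exists c; rewrite in_fset1. Qed.

Lemma psum0_in A B : (0 \in psum A B) = (0 \in A) && (0 \in B).
Proof.
apply/psumP/andP => [[a [b [aA bB e]]]|[h1 h2]].
  have a0 : a = 0%N by lia. have b0 : b = 0%N by lia. by subst.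
by exists 0%N, 0%N.
Qed.

Definition pred_set (A : {fset nat}) : {fset nat} := [fset x.-1 | x in A].

Lemma shift_dec A : Pfin A -> 0 \notin A -> A = psum [fset 1] (pred_set A).
Proof.
move=> PA nA; apply/fsetP=> x; rewrite psum1P; apply/idP/andP.
  move=> xA; have x0 : x != 0%N by apply: contraNneq nA => <-.
  split; first by lia.
  apply/imfsetP; exists x => //=; lia.
move=> [x1 /imfsetP [y /= yA e]].
have y0 : y != 0%N by apply: contraNneq nA => <-.
have -> : x = y by lia. done.
Qed.

Lemma dvd1P A : Pfin A -> mdvd Pfin psum [fset 1] A <-> 0 \notin A.
Proof.
move=> PA; split.
  by move=> [c [Pc ->]]; rewrite psum1P.
move=> nA; exists (pred_set A); split; last exact: shift_dec.
case/fset0Pn: PA => a aA; apply/fset0Pn; exists a.-1; exact: in_imfset.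
Qed.

Lemma pone_powE k : pone_pow k = [fset k].
Proof. elim: k => [//|k IH]; by rewrite /pone_pow iterS -/(pone_pow k) IH psum11. Qed.

Lemma not_unit1 : ~ munit Pfin psum [fset 0] [fset 1].
Proof. move/unitP/fsetP => /(_ 1%N); by rewrite !in_fset1. Qed.

Lemma part1a : mprime Pfin psum [fset 0] [fset 1].
Proof.
split; first exact: Pfin1. split; first exact: not_unit1.
move=> a b Pa Pb /(dvd1P (Pfin_psum Pa Pb)); rewrite psum0_in negb_and.
by case/orP => h; [left; apply/dvd1P | right; apply/dvd1P].
Qed.

Lemma decomp A : Pfin A ->
  exists! kB : nat * {fset nat}, Pfin0 kB.2 /\ A = psum (pone_pow kB.1) kB.2.
Proof.
move=> PA.
have ex : exists x, x \in A by apply/fset0Pn.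
pose k := ex_minn ex.
have kA : k \in A by rewrite /k; case: ex_minnP.
have kmin : forall x, x \in A -> (k <= x)%N by rewrite /k; case: ex_minnP.
have eA : A = psum [fset k] [fset (x - k)%N | x in A].
  apply/fsetP=> x; rewrite psum1P; apply/idP/andP.
    move=> xA; split; first exact: kmin. by apply/imfsetP; exists x.
  move=> [kx /imfsetP [y /= yA e]]; have := kmin _ yA => ky.
  have -> : x = y by lia. done.
exists (k, [fset (x - k)%N | x in A]); split.
  split; last by rewrite pone_powE. rewrite /Pfin0 /=; apply/imfsetP; exists k => //; lia.
move=> [k' B'] [/= B0 e]; rewrite pone_powE in e.
have k'A : k' \in A by rewrite e psum1P leqnn subnn.
have kk : k' = k.
  have : k \in A by []. rewrite {1}e psum1P => /andP [h _].
  have := kmin _ k'A; lia.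
subst k'; congr pair; apply: (@psum1_inj k); by rewrite -e.
Qed.

Notation At := (matom Pfin psum [fset 0]).

Lemma Pfin_nz X : Pfin X -> X != [fset 0] -> exists2 x, x \in X & (0 < x)%N.
Proof.
move=> PX nX; case: (boolP [exists x : X, 0 < val x]%N).
  by case/existsP => x h; exists (val x) => //; apply: valP.
move=> /existsPn h; case/negP: nX; apply/eqP/all0 => // x xX.
have := h [` xX]; rewrite /=; lia.
Qed.

Lemma atom_crit Y y : 0 \in Y -> y \in Y -> (0 < y)%N -> (forall x, x \in Y -> x <= y)%N ->
  (forall a b, a \in Y -> b \in Y -> 0 < a -> 0 < b -> a + b != y)%N -> At Y.
Proof.
move=> Y0 yY ypos ymax nsum.
have PY : Pfin Y by apply/fset0Pn; exists 0%N.
split=> //; split.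
  move/unitP => eY; move: yY; rewrite eY in_fset1; lia.
move=> B C PB PC eY.
move: (Y0); rewrite eY psum0_in => /andP [B0 C0].
case: (eqVneq B [fset 0]) => [->|nB]; first by left; apply/unitP.
case: (eqVneq C [fset 0]) => [->|nC]; first by right; apply/unitP.
exfalso.
have [b' b'B b'p] := Pfin_nz PB nB. have [c' c'C c'p] := Pfin_nz PC nC.
move: (yY); rewrite eY => /psumP [b [c [bB cC ey]]].
have sub1 : forall x, x \in B -> x \in Y by move=> x xB; rewrite eY -(addn0 x); exact: psum_in.
have sub2 : forall x, x \in C -> x \in Y by move=> x xC; rewrite eY -(add0n x); exact: psum_in.
case: (posnP b) => [b0|bp].
  have := ymax _ (eq_ind _ (fun S => _ \in S) (psum_in b'B cC) _ (esym eY)); lia.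
case: (posnP c) => [c0|cp].
  have := ymax _ (eq_ind _ (fun S => _ \in S) (psum_in bB c'C) _ (esym eY)); lia.
by have := nsum _ _ (sub1 _ bB) (sub2 _ cC) bp cp; rewrite ey eqxx.
Qed.

Lemma atom1 : At [fset 1].
Proof.
split; first exact: Pfin1. split; first exact: not_unit1.
move=> B C PB PC e.
case/fset0Pn: PB => b bB; case/fset0Pn: PC => c cC.
have := psum_in bB cC; rewrite -e in_fset1 => /eqP bc.
case: (posnP b) => [b0|bp].
  left; apply/unitP/all0 => // [|x xB]; first by apply/fset0Pn; exists b.
  have := psum_in xB cC; rewrite -e in_fset1 => /eqP; lia.
right; apply/unitP/all0 => // [|x xC]; first by apply/fset0Pn; exists c.
have := psum_in bB xC; rewrite -e in_fset1 => /eqP; lia.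
Qed.

Lemma atom01 : At [fset 0; 1].
Proof.
apply: (@atom_crit _ 1%N); rewrite ?in_fset2 //.
by move=> x; rewrite in_fset2 => /orP [] /eqP ->.
move=> a b; rewrite !in_fset2 => /orP [] /eqP -> /orP [] /eqP ->; lia.
Qed.

Lemma atom_no0 X : At X -> 0 \notin X -> X = [fset 1].
Proof.
move=> [PX [nu h]] nX.
have e := shift_dec PX nX.
have Pp : Pfin (pred_set X).
  case/fset0Pn: PX => a aA; apply/fset0Pn; exists a.-1; exact: in_imfset.
case: (h _ _ (Pfin1 1) Pp e) => [/not_unit1 //|/unitP ep].
by rewrite e ep psum11.
Qed.

Definition F (l : seq {fset nat}) := foldr psum [fset 0] l.

Lemma Pfin_F l : (forall X, X \in l -> At X) -> Pfin (F l).
Proof.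
elim: l => [|X l IH] h /=; first exact: Pfin1.
apply: Pfin_psum; first by case: (h X (mem_head _ _)).
by apply: IH => Y Yl; apply: h; rewrite in_cons Yl orbT.
Qed.

Lemma upper l : (forall X, X \in l -> At X) -> exists2 x, x \in F l & (size l <= x)%N.
Proof.
elim: l => [|X l IH] h /=; first by exists 0%N; rewrite ?in_fset1.
have [x xF sx] := IH (fun Y Yl => h Y (@mem_behead _ (X :: l) Y Yl)).
have [PX [nu _]] := h X (mem_head _ _).
have [y yX yp] : exists2 y, y \in X & (0 < y)%N.
  apply: Pfin_nz => //; apply/eqP => e; apply: nu; rewrite e; exact/unitP.
exists (y + x)%N; [exact: psum_in | rewrite /= -add1n; exact: leq_add yp sx].
Qed.

Definition pc l := count (fun X : {fset nat} => 0 \notin X) l.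
Definition zc l := count (fun X : {fset nat} => 0 \in X) l.

Lemma pc_in l : (forall X, X \in l -> At X) -> pc l \in F l.
Proof.
elim: l => [|X l IH] h /=; first by rewrite in_fset1.
have IH' := IH (fun Y Yl => h Y (@mem_behead _ (X :: l) Y Yl)).
case: (boolP (0 \in X)) => X0; rewrite /pc /= -/(pc l).
  by rewrite -(add0n (pc l)); apply: psum_in.
rewrite (atom_no0 (h X (mem_head _ _)) X0) /= add1n -addn1 addnC; apply: psum_in => //; by rewrite in_fset1.
Qed.

Lemma low0 l : (forall X, X \in l -> At X) -> zc l = 0%N -> F l = [fset pc l].
Proof.
elim: l => [|X l IH] h //=.
rewrite /zc /pc /=; case: (boolP (0 \in X)) => X0 //= z0; rewrite -/(zc l) in z0; rewrite -/(pc l).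
rewrite (atom_no0 (h X (mem_head _ _)) X0) IH ?psum11 //.
exact: (fun Y Yl => h Y (@mem_behead _ (X :: l) Y Yl)).
Qed.

Lemma low1 l : (forall X, X \in l -> At X) -> zc l = 1%N ->
  exists Z, [/\ At Z, 0 \in Z & F l = psum [fset pc l] Z].
Proof.
elim: l => [|X l IH] h //=.
have h' := (fun Y Yl => h Y (@mem_behead _ (X :: l) Y Yl)).
rewrite /zc /pc /=; case: (boolP (0 \in X)) => X0 /= z1; rewrite -/(zc l) in z1; rewrite -/(pc l).
  exists X; split => //; first exact: h (mem_head _ _).
  by rewrite add0n low0 //; [rewrite psumC | lia].
have [Z [AZ Z0 e]] := IH h' z1.
exists Z; split => //; rewrite (atom_no0 (h X (mem_head _ _)) X0) e psumA psum11 add1n //.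
Qed.

Definition itv a b : {fset nat} := [fset x | x in iota a (b.+1 - a)].
Lemma in_itv a b x : (x \in itv a b) = (a <= x <= b)%N.
Proof.
apply/imfsetP/idP => [[y /= yI ->]|h]; first by move: yI; rewrite mem_iota; lia.
by exists x => //=; rewrite mem_iota; lia.
Qed.

Definition Y2 N : {fset nat} := [fset x | x in [seq x <- iota 0 N | (x == 0%N) || odd x]].
Lemma in_Y2 N x : (x \in Y2 N) = (x < N)%N && ((x == 0%N) || odd x).
Proof.
apply/imfsetP/idP => [[y /= yI ->]|h]; first by move: yI; rewrite mem_filter mem_iota; case/andP => -> ?; rewrite andbT; lia.
by exists x => //=; rewrite mem_filter mem_iota; case/andP: h => -> ->; rewrite andbT.
Qed.

Lemma atomY2 N : (2 <= N)%N -> ~~ odd N -> At (Y2 N).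
Proof.
move=> N2 ev.
have oN : odd N.-1 by move: ev; case: N N2 => //= n _; rewrite negbK.
apply: (@atom_crit _ N.-1); rewrite ?in_Y2 ?eqxx ?oN ?orbT; try lia.
  by move=> x; rewrite in_Y2; lia.
move=> a b; rewrite !in_Y2 => /andP [_ ha] /andP [_ hb] ap bp.
have oa : odd a by move: ha; case: (a =P 0%N) => //; lia.
have ob : odd b by move: hb; case: (b =P 0%N) => //; lia.
apply/eqP => e; move: oN; rewrite -e oddD oa ob.
done.
Qed.

Lemma sumY2 N : (2 <= N)%N -> ~~ odd N -> psum [fset 0; 1] (Y2 N) = itv 0 N.
Proof.
move=> N2 ev; apply/fsetP => x; rewrite in_itv; apply/psumP/idP.
  move=> [a [b [aA bB ->]]]; move: aA bB; rewrite in_fset2 in_Y2.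
  case/orP => /eqP -> /andP [bN hb]; try lia.
move=> xN; case: (boolP ((x == 0%N) || odd x)) => hx.
  exists 0%N, x; split; rewrite ?in_fset2 ?eqxx // in_Y2 hx andbT.
  case/orP: hx => [/eqP ->|ox]; first lia.
  case: (x =P N) => [ex|]; last lia. by move: ev; rewrite -ex ox.
have [n en] : exists n, x = n.+1 by move: hx; case: x {xN} => // n; exists n.
subst x; exists 1%N, n; split; rewrite ?in_fset2 ?eqxx ?orbT // ?in_Y2; last lia.
Qed.

Lemma sum01 r : psum [fset 0; 1] (itv 0 r) = itv 0 r.+1.
Proof.
apply/fsetP => x; rewrite in_itv; apply/psumP/idP.
  move=> [a [b [aA bB ->]]]; move: aA bB; rewrite in_fset2 in_itv; case/orP => /eqP ->; lia.
move=> xr; case: (x =P 0%N) => [->|nx].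
  by exists 0%N, 0%N; rewrite in_fset2 in_itv.
exists 1%N, x.-1; rewrite in_fset2 in_itv; split => //; lia.
Qed.

Lemma F_ones p l : F (nseq p [fset 1] ++ l) = psum [fset p] (F l).
Proof.
elim: p => [|p IH] /=; first by rewrite psum0.
by rewrite -/(F _) IH psumA psum11.
Qed.

Lemma F_01 r : F (nseq r [fset 0; 1]) = itv 0 r.
Proof.
elim: r => [|r IH] /=.
  by apply/fsetP=> x; rewrite in_itv in_fset1; apply/eqP/idP; lia.
by rewrite -/(F _) IH sum01.
Qed.

Lemma shift_itv c N : psum [fset c] (itv 0 N) = itv c (c + N).
Proof. by apply/fsetP => x; rewrite psum1P !in_itv; lia. Qed.

Lemma nth_all (P : {fset nat} -> Prop) l :
  (forall X, X \in l -> P X) <-> (forall i, (i < size l)%N -> P (nth [fset 0] l i)).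
Proof.
split=> h.
  by move=> i il; apply: h; exact: mem_nth.
by move=> X /(nthP [fset 0]) [i il <-]; apply: h.
Qed.

Lemma psumX0 A : psum A [fset 0] = A.
Proof. by rewrite psumC psum0. Qed.

Lemma elastic_itv a N : (2 <= N)%N -> ~~ odd N ->
  [/\ mlengths Pfin psum [fset 0] (itv a (a + N)) (a + N),
      mlengths Pfin psum [fset 0] (itv a (a + N)) (a + 2) &
      forall x, mlengths Pfin psum [fset 0] (itv a (a + N)) x -> (a + 2 <= x <= a + N)%N].
Proof.
move=> N2 ev.
have u0 : munit Pfin psum [fset 0] [fset 0] by apply/unitP.
split.
- exists (nseq a [fset 1] ++ nseq N [fset 0; 1]), [fset 0]; split.
  + by rewrite size_cat !size_nseq.
  + split; last split => //.
    apply: (proj1 (@nth_all At _)) => X; rewrite mem_cat => /orP [] /nseqP [-> _].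
      exact: atom1. exact: atom01.
    rewrite psum0 -/(F _) F_ones F_01 shift_itv //.
- exists (nseq a [fset 1] ++ [:: [fset 0; 1]; Y2 N]), [fset 0]; split.
  + by rewrite size_cat !size_nseq.
  + split; last split => //.
    apply: (proj1 (@nth_all At _)) => X; rewrite mem_cat => /orP [/nseqP [-> _]|]; first exact: atom1.
    rewrite !in_cons in_nil orbF => /orP [] /eqP ->; [exact: atom01 | exact: atomY2].
    rewrite psum0 -/(F _) F_ones /= psumX0 sumY2 // shift_itv //.
move=> x [l [u [sl [hat [/unitP -> e]]]]].
have {hat} := proj2 (@nth_all At l) hat => hat.
rewrite psum0 -/(F l) in e.
have [y yF sy] := upper hat.
move: (yF); rewrite -e in_itv => /andP [_ yb].
have pF := pc_in hat; move: (pF); rewrite -e in_itv => /andP [ap _].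
have sz : size l = (pc l + zc l)%N.
  by rewrite /pc /zc addnC -(count_predC (fun X : {fset nat} => 0 \in X)).
have z2 : (2 <= zc l)%N.
  case: (ltnP (zc l) 2) => // zl; exfalso.
  case: (posnP (zc l)) => [z0|zp].
    have := low0 hat z0; rewrite -e => /fsetP h.
    have := h a; have := h a.+1; rewrite !in_itv !in_fset1.
    move=> h1 h2; move: h1 h2; case: (a.+1 =P pc l); case: (a =P pc l); lia.
  have [Z [AZ Z0 eZ]] := low1 hat (ltac:(lia) : zc l = 1%N).
  have pa : pc l = a.
    have : a \in F l by rewrite -e in_itv; lia.
    rewrite eZ psum1P; lia.
  rewrite pa in eZ.
  have eZ' : Z = psum [fset 0; 1] (Y2 N).
    apply: (@psum1_inj a); rewrite -eZ -e sumY2 // shift_itv //.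
  case: AZ => _ [_ /(_ _ _ _ _ eZ')].
  have P01 : Pfin [fset 0; 1] by apply/fset0Pn; exists 0%N; rewrite in_fset2.
  have PY : Pfin (Y2 N) by apply/fset0Pn; exists 0%N; rewrite in_Y2; lia.
  move=> /(_ P01 PY) [/unitP /fsetP /(_ 1%N) | /unitP /fsetP /(_ 1%N)].
    by rewrite in_fset2 in_fset1.
  by rewrite in_Y2 in_fset1 /=; lia.
have h := leq_trans sy yb; rewrite -sl h andbT sz; exact: leq_add ap z2.
Qed.

Section Rat.
Local Open Scope ring_scope.
Lemma t (q : rat) : 1 < q -> exists k m : nat, (0 < m)%N /\ (m < k)%N /\ q = k%:R / m%:R.
Proof.
move=> q1.
have q0 : 0 < q by apply: lt_trans q1.
have n0 : 0 < numq q by rewrite numq_gt0.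
have d0 := denq_gt0 q.
exists `|numq q|%N, `|denq q|%N.
have eq : q = (`|numq q|%N)%:R / (`|denq q|%N)%:R.
  by rewrite !natr_absz !ger0_norm ?ltW // divq_num_den.
have dp : (0 < `|denq q|%N)%N by rewrite absz_gt0 gt_eqF.
split => //; split => //.
have : (`|denq q|%N)%:R < (`|numq q|%N)%:R :> rat.
  rewrite eq ltr_pdivlMr ?mul1r // in q1 ; by rewrite ltr0n.
by rewrite ltr_nat.
Qed.
Lemma t2 (k m : nat) : (0 < m)%N -> (k%:R / m%:R : rat) = (2 * k)%:R / (2 * m)%:R.
Proof. move=> m0. have : (m%:R : rat) != 0 by rewrite pnatr_eq0 -lt0n. move=> h. rewrite !natrM. field. by rewrite h /=. Qed.
End Rat.

Lemma part1e : fully_elastic Pfin psum [fset 0].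
Proof.
move=> q q1 _.
have [k [m [m0 [mk eq]]]] := t q1.
have N2 : (2 <= (k - m).+1.*2)%N by lia.
have ev : ~~ odd (k - m).+1.*2 by rewrite odd_double.
have [h1 h2 h3] := elastic_itv (2 * m - 2) N2 ev.
have e1 : (2 * m - 2 + (k - m).+1.*2 = 2 * k)%N by rewrite -muln2; lia.
have e2 : (2 * m - 2 + 2 = 2 * m)%N by lia.
rewrite e1 e2 in h1 h2 h3.
exists (itv (2 * m - 2) (2 * k)); split.
  apply/fset0Pn; exists (2 * k)%N; rewrite in_itv; lia.
right; exists (2 * k)%N, (2 * m)%N; split => //; split => //; split; first lia.
split => //. by rewrite eq t2.
Qed.

Lemma max_in (r : seq nat) x : x \in r -> (\max_(i <- r) i)%N \in r.
Proof.
elim: r x => // h t IH x _; rewrite big_cons.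
case: t IH => [|h' t'] IH; first by rewrite big_nil maxn0 mem_head.
have := IH h' (mem_head _ _); rewrite /maxn; case: ifP => _ H; [by rewrite in_cons H orbT | by rewrite mem_head].
Qed.

Definition mxs (A : {fset nat}) : nat := (\max_(a <- A) a)%N.
Lemma mxs_in A a : a \in A -> mxs A \in A.
Proof. move=> aA. exact: (max_in aA). Qed.

Lemma mxs_ge A a : a \in A -> (a <= mxs A)%N.
Proof. move=> aA; exact: (leq_bigmax_seq a aA). Qed.

Lemma mxs_psum A B : Pfin A -> Pfin B -> mxs (psum A B) = (mxs A + mxs B)%N.
Proof.
move=> /fset0Pn [a aA] /fset0Pn [b bB]; apply/eqP; rewrite eqn_leq; apply/andP; split.
  apply/bigmax_leqP_seq => c /psumP [x [y [xA yB ->]]] _.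
  exact: leq_add (mxs_ge xA) (mxs_ge yB).
apply: mxs_ge; apply: psum_in; [exact: (mxs_in aA) | exact: (mxs_in bB)].
Qed.

Section Part2.
Variables (D : idomainType) (n : nat).
Local Open Scope ring_scope.

Definition mono (a b : nat) : 'X_{1..n} :=
  [multinom (if val i == 0%N then a else if val i == 1%N then b else 0%N) | i < n].

Definition gen (A : {fset nat}) (a : nat) : {mpoly D[n]} := 'X_[mono a (mxs A - a)].

Definition fI (A : {fset nat}) : {mpoly D[n]} -> Prop :=
  fun p => exists c : nat -> {mpoly D[n]}, p = \sum_(a <- A) c a * gen A a.

Lemma mono_add a b c d : (mono a b + mono c d)%MM = mono (a + c) (b + d).
Proof.
apply/mnmP => i; rewrite mnmDE !mnmE.
by case: (val i == 0%N); case: (val i == 1%N).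
Qed.

Lemma gen_mul A B a b : a \in A -> b \in B -> Pfin A -> Pfin B ->
  gen A a * gen B b = gen (psum A B) (a + b).
Proof.
move=> aA bB PA PB; rewrite /gen -mpolyXD mono_add mxs_psum //.
have := mxs_ge aA; have := mxs_ge bB => h1 h2.
congr ('X_[mono _ _]); lia.
Qed.

Lemma fI_ideal A : is_ideal (fI A).
Proof.
split; first by exists (fun=> 0); rewrite big1 // => a _; rewrite mul0r.
split.
  move=> x y [c ->] [d ->]; exists (fun a => c a + d a).
  by rewrite -big_split /=; apply: eq_bigr => a _; rewrite mulrDl.
move=> r x [c ->]; exists (fun a => r * c a).
by rewrite mulr_sumr; apply: eq_bigr => a _; rewrite mulrA.
Qed.

Lemma sum_single (F : nat -> {mpoly D[n]}) (A : {fset nat}) a :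
  a \in A -> (forall x, x \in A -> x != a -> F x = 0) -> \sum_(x <- A) F x = F a.
Proof.
move=> aA h; rewrite (bigD1_seq a) //= ?fset_uniq // big_seq_cond big1 ?addr0 //.
by move=> x /andP [xA xa]; apply: h.
Qed.

Lemma gen_in A a : a \in A -> fI A (gen A a).
Proof.
move=> aA; exists (fun x => (x == a)%:R).
rewrite (sum_single aA) ?eqxx ?mul1r // => x _ /negbTE ->; by rewrite mul0r.
Qed.

Lemma ideal_sum (I : {mpoly D[n]} -> Prop) (T : eqType) (r : seq T) (G : T -> {mpoly D[n]}) :
  is_ideal I -> (forall i, i \in r -> I (G i)) -> I (\sum_(i <- r) G i).
Proof.
move=> [I0 [ID _]]; elim: r => [|h t IH] hr; first by rewrite big_nil.
rewrite big_cons; apply: ID; first by apply: hr; rewrite mem_head.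
by apply: IH => i it; apply: hr; rewrite in_cons it orbT.
Qed.

Lemma ideal_mul_is I J : is_ideal I -> is_ideal (@ideal_mul {mpoly D[n]} I J).
Proof.
move=> [_ [_ IM]]; split; first by exists [::]; rewrite big_nil.
split.
  move=> x y [s [hs ->]] [t [ht ->]]; exists (s ++ t); split; last by rewrite big_cat.
  by move=> p; rewrite mem_cat => /orP [/hs|/ht].
move=> r x [s [hs ->]]; exists [seq (r * p.1, p.2) | p <- s]; split.
  by move=> p /mapP [q qs ->] /=; case: (hs q qs) => h1 h2; split => //; apply: IM.
by rewrite big_map mulr_sumr; apply: eq_bigr => p _ /=; rewrite mulrA.
Qed.


Lemma fI_mul A B : Pfin A -> Pfin B -> fI (psum A B) = ideal_mul (fI A) (fI B).
Proof.
move=> PA PB; have IMA := proj2 (proj2 (fI_ideal A)).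
have IMC := proj2 (proj2 (fI_ideal (psum A B))).
apply: functional_extensionality => x; apply: propositional_extensionality; split.
- move=> [d ->]; apply: ideal_sum; first exact: ideal_mul_is (fI_ideal A).
  move=> c /psumP [a [b [aA bB ->]]].
  exists [:: (d (a+b)%N * gen A a, gen B b)]; split.
    move=> p; rewrite mem_seq1 => /eqP -> /=; split; [apply: IMA; exact: gen_in | exact: gen_in].
  by rewrite big_seq1 /= -mulrA gen_mul.
- move=> [s [hs ->]]; apply: ideal_sum; first exact: fI_ideal.
  move=> p ps; case: (hs p ps) => [[c ->] [e ->]].
  rewrite mulr_suml; apply: ideal_sum; first exact: fI_ideal.
  move=> a aA; rewrite mulr_sumr; apply: ideal_sum; first exact: fI_ideal.
  move=> b bB; rewrite mulrACA gen_mul //; apply: IMC; apply: gen_in; exact: psum_in.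
Qed.

Lemma mxs0 : mxs [fset 0] = 0%N.
Proof. by have := mxs_in (fset11 0%N); rewrite in_fset1 => /eqP. Qed.

Lemma fI0 : fI [fset 0] = @full_ideal {mpoly D[n]}.
Proof.
apply: functional_extensionality => x; apply: propositional_extensionality; split => // _.
exists (fun=> x); rewrite (sum_single (fset11 0%N)); last first.
  by move=> y; rewrite in_fset1 => ->.
have -> : gen [fset 0] 0 = 1.
  rewrite /gen mxs0 -mpolyX0; congr ('X_[_]); apply/mnmP => i; rewrite mnmE mnm0E.
  by case: (val i == 0%N); case: (val i == 1%N).
by rewrite mulr1.
Qed.

Lemma gen_neq0 A a : gen A a != 0.
Proof.
apply/eqP => h; have := congr1 (mcoeff (mono a (mxs A - a))) h.
by rewrite mcoeffX eqxx mcoeff0 => /eqP; rewrite oner_eq0.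
Qed.

Lemma fI_nz A : Pfin A -> nz_ideal (fI A).
Proof.
move=> /fset0Pn [a aA]; split; first exact: fI_ideal.
exists (gen A a); split; [exact: gen_in | exact: gen_neq0].
Qed.

Lemma coeff_mulX_le (p : {mpoly D[n]}) m k : (p * 'X_[m])@_k != 0 -> (m <= k)%MM.
Proof.
rewrite -mcoeff_msupp (perm_mem (msuppMX p m)) => /mapP [m' _ ->]; exact: lem_addr.
Qed.

Lemma mono_le (h : (1 < n)%N) a b c d : (mono b d <= mono a c)%MM -> (b <= a)%N /\ (d <= c)%N.
Proof.
move/mnm_lepP => H; split.
  by have := H (Ordinal (ltnW h)); rewrite !mnmE.
by have := H (Ordinal h); rewrite !mnmE.
Qed.

Lemma L1 (h : (1 < n)%N) B a M : fI B 'X_[mono a (M - a)] ->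
  exists2 b, b \in B & (b <= a)%N && (mxs B - b <= M - a)%N.
Proof.
move=> [c e].
case: (boolP (has (fun b => (b <= a)%N && (mxs B - b <= M - a)%N) B)) => [/hasP [b bB hb]|/hasPn hn]; first by exists b.
exfalso; have := congr1 (mcoeff (mono a (M - a))) e.
rewrite mcoeffX eqxx raddf_sum big1_seq; first by move/eqP; rewrite oner_eq0.
move=> b /andP [_ bB]; case: (eqVneq ((c b * gen B b)@_(mono a (M - a))) 0) => // /coeff_mulX_le /(mono_le h) [h1 h2].
by have := hn b bB; rewrite h1 h2.
Qed.

Lemma mxs_le (h : (1 < n)%N) A B : Pfin A -> fI A = fI B -> (mxs B <= mxs A)%N.
Proof.
move=> /fset0Pn [a aA] E.
have : fI B (gen A (mxs A)) by rewrite -E; apply: gen_in; exact: mxs_in aA.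
move/(L1 h) => [b bB /andP [h1 h2]]; have := mxs_ge bB; lia.
Qed.

Lemma fI_sub (h : (1 < n)%N) A B : Pfin A -> Pfin B -> fI A = fI B -> forall a, a \in A -> a \in B.
Proof.
move=> PA PB E a aA.
have eM : mxs A = mxs B by apply/eqP; rewrite eqn_leq (mxs_le h PB (esym E)) (mxs_le h PA E).
have : fI B (gen A a) by rewrite -E; apply: gen_in.
move/(L1 h) => [b bB /andP [h1 h2]]; have h3 := mxs_ge bB; have h4 := mxs_ge aA.
have -> : a = b by lia. done.
Qed.

Lemma fI_inj (h : (1 < n)%N) A B : Pfin A -> Pfin B -> fI A = fI B -> A = B.
Proof.
move=> PA PB E; apply/fsetP => x; apply/idP/idP; [exact: (fI_sub h PA PB E) | exact: (fI_sub h PB PA (esym E))].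
Qed.

End Part2.

Theorem proposition5p13 :
  (* Part 1 *)
  ( mprime Pfin psum [fset 0] [fset 1] /\
    mcancellative Pfin psum [fset 1] /\
    (* F = { k.{1} : k in N_0 } is free abelian on {1} *)
    (forall k1 k2 : nat, pone_pow k1 = pone_pow k2 -> k1 = k2) /\
    (* P_fin(N_0) = F x P_fin,0(N_0) *)
    (forall A : {fset nat}, Pfin A ->
       exists! kB : nat * {fset nat}, Pfin0 kB.2 /\ A = psum (pone_pow kB.1) kB.2) /\
    fully_elastic Pfin psum [fset 0] ) /\
  (* Part 2 *)
  ( forall (D : idomainType) (n : nat), (2 <= n)%N ->
      mBF (@nz_ideal {mpoly D[n]}) (@ideal_mul {mpoly D[n]}) (@full_ideal {mpoly D[n]}) ->
      exists f : {fset nat} -> ({mpoly D[n]} -> Prop),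
        (forall A, Pfin A -> nz_ideal (f A)) /\
        f [fset 0] = @full_ideal {mpoly D[n]} /\
        (forall A B, Pfin A -> Pfin B -> f (psum A B) = ideal_mul (f A) (f B)) /\
        (forall A B, Pfin A -> Pfin B -> f A = f B -> A = B) ).
Proof.
split.
  split; first exact: part1a.
  split; first by move=> b c _ _; exact: psum1_inj.
  split.
    move=> k1 k2; rewrite !pone_powE => /fsetP /(_ k1); rewrite !in_fset1 eqxx => /esym /eqP; done.
  split; [exact: decomp | exact: part1e].
move=> D n n2 _; exists (@fI D n); split; first exact: fI_nz.
split; first exact: fI0.
split; first exact: fI_mul.
move=> A B PA PB; exact: fI_inj.
Qed.
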